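(* Let $(X,Y)\sim\mathcal D$ with $Y\in[0,1]^d$, $f:\mathcal X\to[0,1]^d$ a forecaster, $\mathcal A$ a finite action set and $u(a,v)$ a utility linear in $v$. Let $\{B_1,\ldots,B_J\}$ be a partition of the forecast range $[0,1]^d$ into measurable bins and $\mathcal H_{\mathrm{bin}}=\{\mathbf 1_{B_j}: j=1,\ldots,J\}$. Suppose $f$ is $\mathcal H_{\mathrm{bin}}$-calibrated: $\mathbb E[\mathbf 1_{\{f(X)\in B_j\}}(Y-f(X))]=0$ for $j=1,\ldots,J$. Let $$m_j:=\mathbb E[f(X)\mid f(X)\in B_j]=\mathbb E[Y\mid f(X)\in B_j].$$ Consider the robust problem $\max_{a(\cdot)}\min_{q\in\mathcal Q}\mathbb E[u(a(f(X)),q(f(X)))]$ over measurable policies $a(\cdot):[0,1]^d\to\mathcal A$, where $\mathcal Q=\{q:[0,1]^d\to[0,1]^d\mid \mathbb E[\mathbf 1_{B_j}(f(X))(q(f(X))-f(X))]=0,\ j=1,\ldots,J\}$. Then the worst-case belief (a minimizer $q^\star\in\mathcal Q$ of $\mathbb E[\max_{a\in\mathcal A}u(a,q(f(X)))]$) is piecewise constant, $q^\star(v)=m_j$ for $v\in B_j$ (a.e.), and the robust action best-responds to the bin mean: $a_{\mathrm{robust}}(v)\in\arg\max_{a\in\mathcal A}u(a,m_j)$ for $v\in B_j$ (a.e.).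
   Context: Bins $B_j$ are assumed to have positive probability under the distribution of $f(X)$ (bins of probability zero are immaterial). ''a.e.'' refers to the distribution of $f(X)$. *)

(* Defs.v *)
From HB Require Import structures.
From mathcomp Require Import all_boot all_order all_algebra.
From mathcomp Require Import all_classical all_reals all_analysis.
Set Implicit Arguments. Unset Strict Implicit. Unset Printing Implicit Defensive.
Import Order.TTheory GRing.Theory Num.Theory.
Local Open Scope classical_set_scope.
Local Open Scope ring_scope.

(* Vectors of R^d are represented by d.-tuple R, which carries the product
   (Borel) sigma-algebra generated by the coordinates (measurable_structure.v). *)

Section defs.
Variables (R : realType) (d : nat).

Definition cube : set (d.-tuple R) :=
  [set v | forall i : 'I_d, 0 <= tnth v i <= 1].

Definition tadd (v w : d.-tuple R) : d.-tuple R :=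
  [tuple tnth v i + tnth w i | i < d].
Definition tscale (s : R) (v : d.-tuple R) : d.-tuple R :=
  [tuple s * tnth v i | i < d].

Definition linear_in_v (A : Type) (u : A -> d.-tuple R -> R) :=
  forall a (s : R) (v w : d.-tuple R),
    u a (tadd (tscale s v) w) = s * u a v + u a w.

Definition measurable_partition (J : nat) (B : 'I_J -> set (d.-tuple R)) :=
  [/\ (forall j, measurable (B j)),
      (forall j k, j != k -> B j `&` B k = set0) &
      \bigcup_(j in [set: 'I_J]) B j = cube].

Definition measurable_policy (A : finType) (a : d.-tuple R -> A) :=
  forall x : A, measurable (a @^-1` [set x]).

Definition vmax (A : finType) (u : A -> d.-tuple R -> R) (v : d.-tuple R)
  : \bar R := \big[Order.max/-oo%E]_(a : A) (u a v)%:E.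

Section probability_defs.
Variables (dO : measure_display) (Omega : measurableType dO)
  (P : probability Omega R) (V : Omega -> d.-tuple R).
(* V stands for f(X) *)

Definition Eon (B : set (d.-tuple R)) (g : Omega -> R) : \bar R :=
  (\int[P]_w (\1_B (V w) * g w)%:E)%E.

Definition cond_mean (B : set (d.-tuple R)) (Z : Omega -> d.-tuple R)
  : d.-tuple R :=
  [tuple fine (Eon B (fun w => tnth (Z w) i)) / fine (P (V @^-1` B)) | i < d].

Definition Qset (J : nat) (B : 'I_J -> set (d.-tuple R))
  : set (d.-tuple R -> d.-tuple R) :=
  [set q | [/\ measurable_fun [set: d.-tuple R] q,
              q @` cube `<=` cube &
              forall (j : 'I_J) (i : 'I_d),
                Eon (B j) (fun w => tnth (q (V w)) i - tnth (V w) i) = 0%E]].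

Definition payoff (A : finType) (u : A -> d.-tuple R -> R)
  (a : d.-tuple R -> A) (q : d.-tuple R -> d.-tuple R) : \bar R :=
  (\int[P]_w (u (a (V w)) (q (V w)))%:E)%E.

Definition robust_value (A : finType) (u : A -> d.-tuple R -> R) (J : nat)
  (B : 'I_J -> set (d.-tuple R)) (a : d.-tuple R -> A) : \bar R :=
  ereal_inf [set payoff u a q | q in Qset B].

Definition robust_optimal (A : finType) (u : A -> d.-tuple R -> R) (J : nat)
  (B : 'I_J -> set (d.-tuple R)) (a : d.-tuple R -> A) : Prop :=
  measurable_policy a /\
  forall a' : d.-tuple R -> A, measurable_policy a' ->
    (robust_value u B a' <= robust_value u B a)%E.

Definition worst_obj (A : finType) (u : A -> d.-tuple R -> R)
  (q : d.-tuple R -> d.-tuple R) : \bar R :=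
  (\int[P]_w vmax u (q (V w)))%E.

End probability_defs.

Definition pw_const (J : nat) (B : 'I_J -> set (d.-tuple R))
  (m : 'I_J -> d.-tuple R) (v : d.-tuple R) : d.-tuple R :=
  [tuple \sum_(j < J) \1_(B j) v * tnth (m j) i | i < d].

End defs.

(* Main.v *)
Require Import Defs.
From HB Require Import structures.
From mathcomp Require Import all_boot all_order all_algebra.
From mathcomp Require Import all_classical all_reals all_analysis.
From mathcomp Require Import measurable_realfun.
From mathcomp Require Import ring.
Set Implicit Arguments. Unset Strict Implicit. Unset Printing Implicit Defensive.
Import Order.TTheory GRing.Theory Num.Theory.
Local Open Scope classical_set_scope.
Local Open Scope ring_scope.

Section Ex.
Context (R : realType) (dO : measure_display) (Omega : measurableType dO)
  (P : probability Omega R).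

Definition Ex (g : Omega -> R) : R := Rintegral P setT g.
Definition bm (g : Omega -> R) :=
  measurable_fun setT g /\ exists M : R, forall w, `|g w| <= M.

Lemma bm_int g : bm g -> P.-integrable setT (EFin \o g).
Proof.
move=> [mg [M hM]]; apply: measurable_bounded_integrable => //.
  by rewrite -ge0_fin_numE // fin_num_measure.
exists M; split; first exact: num_real.
move=> M' MM' t _ /=; apply: le_trans (hM t) _; exact: ltW.
Qed.

Lemma ExE g : bm g -> (\int[P]_w (g w)%:E = (Ex g)%:E)%E.
Proof.
move=> bg; rewrite /Ex /Rintegral fineK //.
exact: (integrable_fin_num _ (bm_int bg)).
Qed.

Lemma bm_cst c : bm (fun _ => c).
Proof. by split; [exact: measurable_cst | exists `|c|]. Qed.

Lemma bmD f g : bm f -> bm g -> bm (fun w => f w + g w).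
Proof.
move=> [mf [M hM]] [mg [N hN]]; split; first exact: measurable_funD.
by exists (M + N) => w; apply: le_trans (ler_normD _ _) _; exact: lerD.
Qed.

Lemma bmN f : bm f -> bm (fun w => - f w).
Proof.
move=> [mf [M hM]]; split; first exact: measurableT_comp.
by exists M => w; rewrite normrN.
Qed.

Lemma bmB f g : bm f -> bm g -> bm (fun w => f w - g w).
Proof. by move=> bf bg; apply: bmD => //; exact: bmN. Qed.

Lemma bmM f g : bm f -> bm g -> bm (fun w => f w * g w).
Proof.
move=> [mf [M hM]] [mg [N hN]]; split; first exact: measurable_funM.
exists (M * N) => w; rewrite normrM; apply: ler_pM => //.
Qed.

Lemma bm_sum (I : Type) (s : seq I) (F : I -> Omega -> R) :
  (forall i, bm (F i)) -> bm (fun w => \sum_(i <- s) F i w).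
Proof.
move=> bF; elim: s => [|h t ih].
  by under [X in bm X]eq_fun do rewrite big_nil; exact: bm_cst.
by under [X in bm X]eq_fun do rewrite big_cons; exact: bmD.
Qed.

Lemma bm_indic (dT : measure_display) (T : measurableType dT) (Z : Omega -> T) (S : set T) :
  measurable_fun setT Z -> measurable S -> bm (fun w => \1_S (Z w)).
Proof.
move=> mZ mS; split.
  apply: (measurableT_comp (measurable_indic mS) mZ).
exists 1 => w; rewrite /indic; case: (_ \in _); rewrite ?normr1 ?normr0 //.
Qed.

Lemma ExD f g : bm f -> bm g -> Ex (fun w => f w + g w) = Ex f + Ex g.
Proof. by move=> bf bg; rewrite /Ex RintegralD //; exact: bm_int. Qed.

Lemma ExN f : bm f -> Ex (fun w => - f w) = - Ex f.
Proof.
move=> bf; under eq_fun do rewrite -mulN1r.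
by rewrite /Ex RintegralZl ?mulN1r //; exact: bm_int.
Qed.

Lemma ExB f g : bm f -> bm g -> Ex (fun w => f w - g w) = Ex f - Ex g.
Proof. by move=> bf bg; rewrite ExD ?ExN //; exact: bmN. Qed.

Lemma ExZ c f : bm f -> Ex (fun w => c * f w) = c * Ex f.
Proof. by move=> bf; rewrite /Ex RintegralZl //; exact: bm_int. Qed.

Lemma Ex_sum (I : Type) (s : seq I) (F : I -> Omega -> R) :
  (forall i, bm (F i)) -> Ex (fun w => \sum_(i <- s) F i w) = \sum_(i <- s) Ex (F i).
Proof.
move=> bF; elim: s => [|h t ih].
  under eq_fun do rewrite big_nil. rewrite big_nil /Ex Rintegral_cst //.
  by rewrite mul0r.
under eq_fun do rewrite big_cons. by rewrite ExD ?ih ?big_cons //; exact: bm_sum.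
Qed.

Lemma Ex_le f g : bm f -> bm g -> (forall w, f w <= g w) -> Ex f <= Ex g.
Proof. by move=> bf bg fg; apply: le_Rintegral => //; exact: bm_int. Qed.

Lemma Ex_cst c : Ex (fun _ => c) = c.
Proof. by rewrite /Ex Rintegral_cst // [X in fine X](probability_setT P) mulr1. Qed.

Lemma Ex_indic (S : set Omega) : measurable S -> Ex (\1_S) = fine (P S).
Proof. by move=> mS; rewrite /Ex /Rintegral integral_indic // setIT. Qed.

End Ex.

Section basics.
Context (R : realType) (d : nat).
Implicit Types v w : d.-tuple R.

Definition t0 : d.-tuple R := [tuple (0:R) | _ < d].
Definition ev (i : 'I_d) : d.-tuple R := [tuple ((i == k)%:R : R) | k < d].

Lemma tnth_tadd v w i : tnth (tadd v w) i = tnth v i + tnth w i.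
Proof. by rewrite /tadd tnth_mktuple. Qed.
Lemma tnth_tscale s v i : tnth (tscale s v) i = s * tnth v i.
Proof. by rewrite /tscale tnth_mktuple. Qed.

Lemma tuple_decomp v :
  v = \big[@tadd R d/t0]_(i < d) tscale (tnth v i) (ev i).
Proof.
apply: eq_from_tnth => k.
rewrite (@big_morph _ _ (fun t => tnth t k) 0 +%R t0 (@tadd R d)); last 2 first.
- by move=> x y; rewrite tnth_tadd.
- by rewrite tnth_mktuple.
rewrite (bigD1 k) //= big1 ?addr0.
  by rewrite tnth_tscale tnth_mktuple eqxx mulr1.
by move=> i /negPf ik; rewrite tnth_tscale tnth_mktuple ik mulr0.
Qed.

Context (A : Type) (u : A -> d.-tuple R -> R) (hu : linear_in_v u).

Lemma u0 a : u a t0 = 0.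
Proof.
have := hu a 1 t0 t0.
have -> : tadd (tscale 1 t0) t0 = t0.
  by apply: eq_from_tnth => k; rewrite tnth_tadd tnth_tscale !tnth_mktuple mulr0 addr0.
rewrite mul1r => /(congr1 (fun x => x - u a t0)) /=; rewrite subrr addrK => h.
by rewrite -h.
Qed.

Lemma uadd a v w : u a (tadd v w) = u a v + u a w.
Proof.
have e : tscale 1 v = v by apply: eq_from_tnth => k; rewrite tnth_tscale mul1r.
by rewrite -{1}e hu mul1r.
Qed.

Lemma uscale a s v : u a (tscale s v) = s * u a v.
Proof.
have e : tadd (tscale s v) t0 = tscale s v.
  by apply: eq_from_tnth => k; rewrite tnth_tadd [tnth t0 k]tnth_mktuple addr0.
by rewrite -e hu u0 addr0.
Qed.

Lemma ulin a v : u a v = \sum_(i < d) tnth v i * u a (ev i).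
Proof.
rewrite {1}(tuple_decomp v).
rewrite (@big_morph _ _ (u a) 0 +%R t0 (@tadd R d)); last 2 first.
- by move=> x y; rewrite uadd.
- by rewrite u0.
by apply: eq_bigr => i _; rewrite uscale.
Qed.

Lemma ubound a v : cube v -> `|u a v| <= \sum_(i < d) `|u a (ev i)|.
Proof.
move=> cv; rewrite ulin; apply: le_trans (ler_norm_sum _ _ _) _.
apply: ler_sum => i _; rewrite normrM; apply: ler_piMl => //.
have /andP[h0 h1] := cv i; by rewrite ger0_norm.
Qed.

End basics.

Section vmax.
Context (R : realType) (d : nat) (A : finType) (a0 : A) (u : A -> d.-tuple R -> R).

Definition amax (v : d.-tuple R) : A := Order.arg_max a0 xpredT (fun b => u b v).
Definition vmr v := u (amax v) v.

Lemma vmr_ge b v : u b v <= vmr v.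
Proof. by rewrite /vmr /amax; case: arg_maxP => //= i _ h; exact: h. Qed.

Lemma bigmax_le_gen (disp : Order.disp_t) (T : orderType disp) (I : Type) (s : seq I) (x0 x : T) (F : I -> T) :
  (x0 <= x)%O -> (forall i, (F i <= x)%O) -> (\big[Order.max/x0]_(i <- s) F i <= x)%O.
Proof.
move=> h0 hF; elim: s => [|y s ih]; first by rewrite big_nil.
by rewrite big_cons ge_max hF ih.
Qed.

Lemma le_bigmax_gen (disp : Order.disp_t) (T : orderType disp) (I : eqType) (s : seq I) (x0 : T) (F : I -> T) i :
  i \in s -> (F i <= \big[Order.max/x0]_(i <- s) F i)%O.
Proof.
elim: s => [//|y s ih]; rewrite inE big_cons le_max => /predU1P[->|/ih ->].
  by rewrite lexx.
by rewrite orbT.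
Qed.

Lemma vmaxE v : vmax u v = (vmr v)%:E.
Proof.
apply/eqP; rewrite eq_le; apply/andP; split.
  by apply: bigmax_le_gen => [|b]; [exact: leNye | rewrite lee_fin vmr_ge].
by apply: le_bigmax_gen; exact: mem_index_enum.
Qed.

Lemma vmr_big v : vmr v = \big[Order.max/u a0 v]_(b <- index_enum A) u b v.
Proof.
apply/eqP; rewrite eq_le; apply/andP; split.
  exact: (le_bigmax_gen (u a0 v) (fun b => u b v) (mem_index_enum (amax v))).
by apply: bigmax_le_gen => [|b]; exact: vmr_ge.
Qed.

End vmax.

Section main.
Context (R : realType) (d : nat) (dO : measure_display) (Omega : measurableType dO)
  (P : probability Omega R) (V : Omega -> d.-tuple R)
  (mV : measurable_fun setT V) (cV : forall w, cube (V w))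
  (J : nat) (B : 'I_J -> set (d.-tuple R)) (hB : measurable_partition B)
  (pos : forall j, (0 < P (V @^-1` B j))%E).

Lemma mB j : measurable (B j). Proof. by case: hB. Qed.

Lemma Bcube j v : B j v -> cube v.
Proof. by case: hB => _ _ <- Bv; exists j. Qed.

Lemma cube_B v : cube v -> exists j, B j v.
Proof. by case: hB => _ _ <- [j _ Bv]; exists j. Qed.

Lemma B_uniq j k v : B j v -> B k v -> j = k.
Proof.
move=> Bj Bk; apply/eqP; apply/negPn/negP => /negbTE jk.
case: hB => _ dB _; have := dB j k; rewrite jk => /(_ isT) h.
by have : (B j `&` B k) v by []; rewrite h.
Qed.

Lemma indB j k v : B j v -> \1_(B k) v = (j == k)%:R :> R.
Proof.
move=> Bj; rewrite indicE; case: eqP => [<-|jk]; first by rewrite mem_set.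
by rewrite memNset // => Bk; apply: jk; exact: B_uniq Bk.
Qed.

Lemma ind_out k v : ~ cube v -> \1_(B k) v = 0 :> R.
Proof. by move=> nc; rewrite indicE memNset // => /Bcube. Qed.

Lemma sum_ind v : cube v -> \sum_k \1_(B k) v = 1 :> R.
Proof.
move=> /cube_B [j Bj]; rewrite (bigD1 j) //= big1 ?addr0; first by rewrite (indB _ Bj) eqxx.
by move=> k /negPf kj; rewrite (indB _ Bj) eq_sym kj.
Qed.

Lemma mpre j : measurable (V @^-1` B j).
Proof. by rewrite -[X in measurable X]setTI; apply: mV => //; exact: mB. Qed.

Definition pj j := fine (P (V @^-1` B j)).

Lemma pj_gt0 j : 0 < pj j.
Proof. by rewrite /pj fine_gt0 // pos /= ltey_eq fin_num_measure //; exact: mpre. Qed.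

Lemma Ex_ind j : Ex P (fun w => \1_(B j) (V w)) = pj j.
Proof.
transitivity (Ex P (\1_(V @^-1` B j))); last exact: Ex_indic (mpre j).
by congr Ex; apply: funext => w; rewrite !indicE.
Qed.

Lemma bm_ind j : bm (fun w => \1_(B j) (V w) : R).
Proof. exact: bm_indic mV (mB j). Qed.

Lemma bm_tn (Z : Omega -> d.-tuple R) i :
  measurable_fun setT Z -> (forall w, cube (Z w)) -> bm (fun w => tnth (Z w) i).
Proof.
move=> mZ cZ; split; first exact: (measurableT_comp (measurable_tnth i) mZ).
exists 1 => w; have /andP[h0 h1] := cZ w i; by rewrite ger0_norm.
Qed.

Lemma Eon_Ex j g : bm g ->
  Eon P V (B j) g = (Ex P (fun w => \1_(B j) (V w) * g w))%:E.
Proof. by move=> bg; rewrite /Eon ExE //; apply: bmM => //; exact: bm_ind. Qed.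

Lemma Ex_split g : bm g -> Ex P g = \sum_j Ex P (fun w => \1_(B j) (V w) * g w).
Proof.
move=> bg; rewrite -Ex_sum; last by move=> j; apply: bmM => //; exact: bm_ind.
by congr Ex; apply: funext => w; rewrite -mulr_suml sum_ind // mul1r.
Qed.

Definition mm j := cond_mean P V (B j) V.

Lemma Ex_indV j i : Ex P (fun w => \1_(B j) (V w) * tnth (V w) i) = tnth (mm j) i * pj j.
Proof.
rewrite /mm /cond_mean tnth_mktuple Eon_Ex /=; last exact: bm_tn.
by rewrite -/(pj j) divfK // gt_eqF // pj_gt0.
Qed.

Lemma mm_cube j : cube (mm j).
Proof.
move=> i; have p0 := pj_gt0 j.
have -> : tnth (mm j) i = Ex P (fun w => \1_(B j) (V w) * tnth (V w) i) / pj j.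
  by rewrite Ex_indV mulfK // gt_eqF.
have b1 : bm (fun w => \1_(B j) (V w) * tnth (V w) i).
  by apply: bmM; [exact: bm_ind | exact: bm_tn].
apply/andP; split.
  apply: divr_ge0; last exact: ltW.
  rewrite -(Ex_cst P 0); apply: Ex_le => //; first exact: bm_cst.
  move=> w /=; have /andP[h0 _] := cV w i; apply: mulr_ge0 => //.
rewrite ler_pdivrMr // mul1r -Ex_ind; apply: Ex_le => //; first exact: bm_ind.
move=> w; have /andP[h0 h1] := cV w i; rewrite indicE.
by case: (_ \in _); rewrite ?mul1r ?mul0r.
Qed.


Lemma measurable_sum_gen (dT : measure_display) (T : measurableType dT) (I : Type) (s : seq I)
  (F : I -> T -> R) : (forall i, measurable_fun setT (F i)) ->
  measurable_fun setT (fun t => \sum_(i <- s) F i t).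
Proof.
move=> mF; elim: s => [|h t ih].
  by under eq_fun do rewrite big_nil; exact: measurable_cst.
by under eq_fun do rewrite big_cons; exact: measurable_funD.
Qed.

Context (A : finType) (a0 : A) (u : A -> d.-tuple R -> R) (hu : linear_in_v u).

Definition K := \sum_(b : A) \sum_(i < d) `|u b (@ev R d i)|.

Lemma uK b v : cube v -> `|u b v| <= K.
Proof.
move=> cv; apply: le_trans (ubound hu b cv) _.
rewrite /K (bigD1 b) //= lerDl; apply: sumr_ge0 => c _; exact: sumr_ge0.
Qed.

Lemma bm_u (Z : Omega -> d.-tuple R) b :
  measurable_fun setT Z -> (forall w, cube (Z w)) -> bm (fun w => u b (Z w)).
Proof.
move=> mZ cZ; under eq_fun do rewrite (ulin hu).
apply: bm_sum => i; apply: bmM; [exact: bm_tn | exact: bm_cst].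
Qed.

Lemma bm_vmr (Z : Omega -> d.-tuple R) :
  measurable_fun setT Z -> (forall w, cube (Z w)) -> bm (fun w => vmr a0 u (Z w)).
Proof.
move=> mZ cZ; split; last by exists K => w; exact: uK.
under eq_fun do rewrite vmr_big.
elim: (index_enum A) => [|h t ih].
  by under eq_fun do rewrite big_nil; case: (bm_u a0 mZ cZ).
under eq_fun do rewrite big_cons.
by apply: measurable_maxr => //; case: (bm_u h mZ cZ).
Qed.

Lemma meas_pol (dT : measure_display) (T : measurableType dT) (a : T -> A)
  (ha : forall x, measurable (a @^-1` [set x])) (F : A -> T -> R) :
  (forall x, measurable_fun setT (F x)) -> measurable_fun setT (fun t => F (a t) t).
Proof.
move=> mF.
have -> : (fun t => F (a t) t) = (fun t => \sum_(x : A) \1_(a @^-1` [set x]) t * F x t).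
  apply: funext => t; rewrite (bigD1 (a t)) //= big1 ?addr0.
    by rewrite indicE mem_set // mul1r.
  by move=> x xa; rewrite indicE memNset ?mul0r // => /= ax; move: xa; rewrite ax eqxx.
apply: measurable_sum_gen => x; apply: measurable_funM => //.
Qed.

Lemma bm_pol (a : d.-tuple R -> A) (ha : measurable_policy a) (Z : Omega -> d.-tuple R) :
  measurable_fun setT Z -> (forall w, cube (Z w)) -> bm (fun w => u (a (V w)) (Z w)).
Proof.
move=> mZ cZ; split; last by exists K => w; exact: uK.
apply: (@meas_pol _ _ (a \o V) _ (fun x w => u x (Z w))).
  move=> x; rewrite comp_preimage -[X in measurable X]setTI; exact: mV.
by move=> x; case: (bm_u x mZ cZ).
Qed.


Definition qs := pw_const B mm.

Lemma qs_on j v : B j v -> qs v = mm j.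
Proof.
move=> Bj; apply: eq_from_tnth => i; rewrite /qs /pw_const tnth_mktuple.
rewrite (bigD1 j) //= big1 ?addr0; first by rewrite (indB _ Bj) eqxx mul1r.
by move=> k /negPf kj; rewrite (indB _ Bj) eq_sym kj mul0r.
Qed.

Lemma ind_qs j v (F : d.-tuple R -> R) :
  \1_(B j) v * F (qs v) = \1_(B j) v * F (mm j).
Proof.
case: (pselect (B j v)) => h; first by rewrite (qs_on h).
by rewrite indicE memNset // !mul0r.
Qed.

Lemma qs_cube v : cube v -> cube (qs v).
Proof. by move=> /cube_B [j Bj]; rewrite (qs_on (j:=j) Bj); exact: mm_cube. Qed.

Lemma qs_meas : measurable_fun setT qs.
Proof.
apply/measurable_fun_tnthP => i.
have -> : (@tnth d R ^~ i \o qs) = (fun v => \sum_(k < J) \1_(B k) v * tnth (mm k) i).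
  by apply: funext => v; rewrite /= /qs /pw_const tnth_mktuple.
apply: measurable_sum_gen => k; apply: measurable_funM => //.
exact: measurable_indic (mB k).
Qed.

Lemma Q_facts q : Qset P V B q ->
  measurable_fun setT (fun w => q (V w)) /\ forall w, cube (q (V w)).
Proof.
case=> mq iq _; split; first exact: (measurableT_comp mq mV).
by move=> w; apply: iq; exists (V w).
Qed.

Lemma Q_ind q (hq : Qset P V B q) j i :
  Ex P (fun w => \1_(B j) (V w) * tnth (q (V w)) i) = tnth (mm j) i * pj j.
Proof.
have [mq cq] := Q_facts hq.
have b1 : bm (fun w => tnth (q (V w)) i) by exact: bm_tn.
have b2 : bm (fun w => tnth (V w) i) by exact: bm_tn.
have h0 : Eon P V (B j) (fun w => tnth (q (V w)) i - tnth (V w) i) = 0%E.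
  by case: hq => _ _; apply.
rewrite Eon_Ex in h0; last exact: bmB.
have h := EFin_inj h0.
rewrite -Ex_indV; apply/eqP; rewrite -subr_eq0 -ExB.
- by under eq_fun do rewrite -mulrBr; apply/eqP.
- by apply: bmM => //; exact: bm_ind.
- by apply: bmM => //; exact: bm_ind.
Qed.

Lemma G q (hq : Qset P V B q) j b :
  Ex P (fun w => \1_(B j) (V w) * u b (q (V w))) = pj j * u b (mm j).
Proof.
have [mq cq] := Q_facts hq.
under eq_fun do rewrite (ulin hu) mulr_sumr.
rewrite Ex_sum; last first.
  move=> i; apply: bmM; first exact: bm_ind.
  by apply: bmM; [exact: bm_tn | exact: bm_cst].
rewrite (ulin hu) mulr_sumr; apply: eq_bigr => i _.
under eq_fun do rewrite mulrA mulrC.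
rewrite ExZ; last by apply: bmM; [exact: bm_ind | exact: bm_tn].
rewrite Q_ind //; ring.
Qed.

Lemma qsV_meas : measurable_fun setT (fun w => qs (V w)).
Proof. exact: (measurableT_comp qs_meas mV). Qed.

Lemma qsV_cube w : cube (qs (V w)).
Proof. exact: qs_cube. Qed.

Lemma Qs_in : Qset P V B qs.
Proof.
split; first exact: qs_meas.
  by move=> _ [v cv <-]; exact: qs_cube.
move=> j i; rewrite Eon_Ex; last by apply: bmB; [exact: bm_tn qsV_meas qsV_cube | exact: bm_tn].
congr EFin.
under eq_fun do rewrite (ind_qs _ _ (fun t => tnth t i - tnth (V _) i)) mulrBr.
rewrite ExB; last 2 first.
- by apply: bmM; [exact: bm_ind | exact: bm_cst].
- by apply: bmM; [exact: bm_ind | exact: bm_tn].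
rewrite Ex_indV; under eq_fun do rewrite mulrC.
by rewrite ExZ ?Ex_ind ?subrr //; exact: bm_ind.
Qed.


Definition W := \sum_(j < J) pj j * vmr a0 u (mm j).

Lemma L1 : Ex P (fun w => vmr a0 u (qs (V w))) = W.
Proof.
rewrite Ex_split; last exact: bm_vmr qsV_meas qsV_cube.
apply: eq_bigr => j _.
under eq_fun do rewrite (ind_qs _ _ (vmr a0 u)) mulrC.
rewrite ExZ; last exact: bm_ind.
by rewrite Ex_ind mulrC.
Qed.

Lemma L3 q : Qset P V B q -> W <= Ex P (fun w => vmr a0 u (q (V w))).
Proof.
move=> hq; have [mq cq] := Q_facts hq.
rewrite Ex_split; last exact: bm_vmr.
apply: ler_sum => j _; rewrite /vmr -(G hq j).
apply: Ex_le.
- by apply: bmM; [exact: bm_ind | exact: bm_u].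
- by apply: bmM; [exact: bm_ind | exact: bm_vmr].
move=> w; apply: ler_wpM2l; first by rewrite indicE.
exact: vmr_ge.
Qed.

Lemma worst_E q : measurable_fun setT (fun w => q (V w)) -> (forall w, cube (q (V w))) ->
  worst_obj P V u q = (Ex P (fun w => vmr a0 u (q (V w))))%:E.
Proof.
move=> mq cq; rewrite /worst_obj; under eq_integral do rewrite (vmaxE a0).
by rewrite ExE //; exact: bm_vmr.
Qed.

Definition astar v := Order.arg_max a0 xpredT (fun b => \sum_(j < J) \1_(B j) v * u b (mm j)).

Lemma astar_on j v : B j v -> astar v = amax a0 u (mm j).
Proof.
move=> Bj; rewrite /astar /amax; congr Order.arg_max; apply: funext => b.
rewrite (bigD1 j) //= big1 ?addr0; first by rewrite (indB _ Bj) eqxx mul1r.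
by move=> k /negPf kj; rewrite (indB _ Bj) eq_sym kj mul0r.
Qed.

Lemma astar_out v : ~ cube v -> astar v = Order.arg_max a0 xpredT (fun b => 0 : R).
Proof.
move=> nc; rewrite /astar; congr Order.arg_max; apply: funext => b.
by rewrite big1 // => k _; rewrite ind_out // mul0r.
Qed.

Lemma piece (S0 : set (d.-tuple R)) c x : measurable S0 -> (forall v, S0 v -> astar v = c) ->
  measurable (S0 `&` astar @^-1` [set x]).
Proof.
move=> mS hS; case: (eqVneq c x) => [<-|cx].
  have -> : S0 `&` astar @^-1` [set c] = S0; last by [].
  by apply/seteqP; split => [v []//|v Sv]; split => //; rewrite /preimage /= hS.
have -> : S0 `&` astar @^-1` [set x] = set0; last exact: measurable0.
apply/seteqP; split => [v [Sv /= ax]|v []//].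
by move: cx; rewrite -(hS v Sv) ax eqxx.
Qed.

Lemma cube_meas : measurable (@cube R d).
Proof.
case: hB => _ _ <-; apply: fin_bigcup_measurable => //; last by move=> j _; exact: mB.
Qed.

Lemma astar_meas : measurable_policy astar.
Proof.
move=> x.
have -> : astar @^-1` [set x] = (\bigcup_(j in setT) (B j `&` astar @^-1` [set x]))
    `|` (~` @cube R d `&` astar @^-1` [set x]).
  apply/seteqP; split => [v Sv|v [[j _ []]|[]]//].
  case: (pselect (cube v)) => [/cube_B[j Bj]|nc]; [left; exists j | right] => //.
apply: measurableU.
  apply: fin_bigcup_measurable; first exact: finite_finset.
  move=> j _; apply: piece; first exact: mB.
  by move=> v; exact: astar_on.
apply: piece; first exact: measurableC cube_meas.
by move=> v; exact: astar_out.
Qed.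

Lemma payoff_E a (ha : measurable_policy a) q :
  measurable_fun setT (fun w => q (V w)) -> (forall w, cube (q (V w))) ->
  payoff P V u a q = (Ex P (fun w => u (a (V w)) (q (V w))))%:E.
Proof. by move=> mq cq; rewrite /payoff ExE //; exact: bm_pol. Qed.

Lemma L4 q : Qset P V B q -> Ex P (fun w => u (astar (V w)) (q (V w))) = W.
Proof.
move=> hq; have [mq cq] := Q_facts hq.
rewrite Ex_split; last exact: (bm_pol astar_meas mq cq).
apply: eq_bigr => j _.
transitivity (Ex P (fun w => \1_(B j) (V w) * u (amax a0 u (mm j)) (q (V w)))).
  congr Ex; apply: funext => w; case: (pselect (B j (V w))) => h.
    by rewrite (astar_on h).
  by rewrite indicE memNset // !mul0r.
by rewrite G.
Qed.

Lemma L5 a : measurable_policy a -> Ex P (fun w => u (a (V w)) (qs (V w))) <= W.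
Proof.
move=> ha; rewrite -L1; apply: Ex_le.
- exact: (bm_pol ha qsV_meas qsV_cube).
- exact: bm_vmr qsV_meas qsV_cube.
by move=> w; exact: vmr_ge.
Qed.

Lemma rv_astar : (W%:E <= robust_value P V u B astar)%E.
Proof.
apply: le_ereal_inf_tmp => _ [q hq <-]; have [mq cq] := Q_facts hq.
by rewrite payoff_E //; [rewrite L4 | exact: astar_meas].
Qed.

Lemma rv_le a : measurable_policy a -> (robust_value P V u B a <= W%:E)%E.
Proof.
move=> ha; apply: ge_ereal_inf; exists (payoff P V u a qs); first by exists qs => //; exact: Qs_in.
by rewrite payoff_E //; [rewrite lee_fin L5 | exact: qsV_meas | exact: qsV_cube].
Qed.


Lemma part4 a (ha : measurable_policy a) : (W%:E <= robust_value P V u B a)%E ->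
  forall j, {ae pushforward P V, forall v, B j v -> forall b, u b (mm j) <= u (a v) (mm j)}.
Proof.
move=> hopt j.
have hW : W <= Ex P (fun w => u (a (V w)) (qs (V w))).
  rewrite -lee_fin -payoff_E //; [|exact: qsV_meas|exact: qsV_cube].
  apply: le_trans hopt _; apply: ge_ereal_inf; exists (payoff P V u a qs) => //.
  by exists qs => //; exact: Qs_in.
pose D w := vmr a0 u (qs (V w)) - u (a (V w)) (qs (V w)).
have bD : bm D.
  by apply: bmB; [exact: bm_vmr qsV_meas qsV_cube | exact: (bm_pol ha qsV_meas qsV_cube)].
have ED : Ex P D <= 0.
  rewrite /D ExB; [|exact: bm_vmr qsV_meas qsV_cube | exact: (bm_pol ha qsV_meas qsV_cube)].
  by rewrite L1 subr_le0.
pose gap x := vmr a0 u (mm j) - u x (mm j).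
pose dl := \big[Order.min/1]_(x | 0 < gap x) gap x.
have dl0 : 0 < dl.
  by apply: (big_ind (fun y => 0 < y)) => // y z hy hz; rewrite lt_min hy hz.
have dlle x : 0 < gap x -> dl <= gap x.
  by move=> gx; rewrite /dl (bigD1 x) //= ge_min lexx.
pose h v := u (a v) (mm j).
have mh : measurable_fun setT h.
  exact: (@meas_pol _ _ a ha (fun x _ => u x (mm j))).
pose N := B j `&` [set v | h v < vmr a0 u (mm j)].
have mN : measurable N.
  apply: measurableI; first exact: mB.
  have := mh measurableT _ (measurable_itv `]-oo, vmr a0 u (mm j)[); rewrite setTI.
  congr measurable; apply/seteqP; split => v /=; by rewrite in_itv.
have mVN : measurable (V @^-1` N).
  by rewrite -[X in measurable X]setTI; apply: mV.
have pt w : dl * \1_N (V w) <= D w.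
  case: (pselect (N (V w))) => [[Bj hv]|nN].
    rewrite indicE mem_set // mulr1 /D (qs_on Bj); apply: dlle.
    by rewrite /gap subr_gt0.
  rewrite indicE memNset // mulr0 /D subr_ge0; exact: vmr_ge.
have EN : Ex P (fun w => \1_N (V w) : R) = fine (P (V @^-1` N)).
  transitivity (Ex P (\1_(V @^-1` N))); last exact: Ex_indic mVN.
  by congr Ex; apply: funext => w; rewrite !indicE.
have bN : bm (fun w => \1_N (V w) : R) by exact: bm_indic mV mN.
have h1 : dl * fine (P (V @^-1` N)) <= 0.
  rewrite -EN -ExZ //; apply: le_trans ED; apply: Ex_le => //.
  exact: bmM (bm_cst _ _) bN.
have h2 : fine (P (V @^-1` N)) = 0.
  apply/eqP; rewrite eq_le -(pmulr_rle0 _ dl0) h1 /=.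
  by apply: fine_ge0; exact: measure_ge0.
have PN : P (V @^-1` N) = 0%E.
  by rewrite -[LHS]fineK ?h2 // fin_num_measure.
exists N; split => //.
move=> v /= nP; split.
  by apply: contrapT => nB; apply: nP => /nB.
apply: contrapT => /negP; rewrite -leNgt => hge; apply: nP => _ b.
exact: le_trans (vmr_ge _ _ b _) hge.
Qed.

Lemma Eon_eq (Z Z' : Omega -> R) j : bm Z -> bm Z' ->
  Eon P V (B j) (fun w => Z w - Z' w) = 0%E -> Eon P V (B j) Z = Eon P V (B j) Z'.
Proof.
move=> bZ bZ' h0; rewrite Eon_Ex in h0; last exact: bmB.
have h := EFin_inj h0; rewrite !Eon_Ex //; congr EFin; apply: subr0_eq; rewrite -ExB.
- by under eq_fun do rewrite -mulrBr.
- by apply: bmM => //; exact: bm_ind.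
- by apply: bmM => //; exact: bm_ind.
Qed.

Lemma main_sec (Y : Omega -> d.-tuple R) : measurable_fun setT Y -> (forall w, cube (Y w)) ->
  (forall j i, Eon P V (B j) (fun w => tnth (Y w) i - tnth (V w) i) = 0%E) ->
  (forall j, mm j = cond_mean P V (B j) Y) /\
  (Qset P V B qs /\ forall q, Qset P V B q -> (worst_obj P V u qs <= worst_obj P V u q)%E) /\
  (exists a, robust_optimal P V u B a /\
     forall j v, B j v -> forall b, u b (mm j) <= u (a v) (mm j)) /\
  (forall a, robust_optimal P V u B a -> forall j,
     {ae pushforward P V, forall v, B j v -> forall b, u b (mm j) <= u (a v) (mm j)}).
Proof.
move=> mY cY cal; split.
  move=> j; apply: eq_from_tnth => i; rewrite /mm /cond_mean !tnth_mktuple.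
  congr (fine _ / _); apply/esym/Eon_eq; [exact: bm_tn | exact: bm_tn | exact: cal].
split.
  split; first exact: Qs_in.
  move=> q hq; have [mq cq] := Q_facts hq.
  rewrite (worst_E qsV_meas qsV_cube) (worst_E mq cq) lee_fin L1; exact: L3.
split.
  exists astar; split.
    split; first exact: astar_meas.
    by move=> a' ha'; apply: le_trans (rv_le ha') rv_astar.
  by move=> j v Bj b; rewrite (astar_on Bj); exact: vmr_ge.
move=> a [ha opt] j; apply: part4 ha _ j.
exact: le_trans rv_astar (opt _ astar_meas).
Qed.

End main.

Unset Implicit Arguments.

Theorem proposition2
  (R : realType) (d : nat)
  (dO : measure_display) (Omega : measurableType dO) (P : probability Omega R)
  (dX : measure_display) (TX : measurableType dX)
  (X : Omega -> TX) (Y : Omega -> d.-tuple R) (f : TX -> d.-tuple R)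
  (A : finType) (u : A -> d.-tuple R -> R)
  (J : nat) (B : 'I_J -> set (d.-tuple R)) :
  measurable_fun [set: Omega] X ->
  measurable_fun [set: Omega] Y ->
  (forall w, cube (Y w)) ->
  measurable_fun [set: TX] f ->
  (forall x, cube (f x)) ->
  (0 < #|A|)%N ->
  linear_in_v u ->
  measurable_partition B ->
  (* bins have positive probability under the law of f(X) *)
  (forall j, (0 < P ((f \o X) @^-1` B j))%E) ->
  (* H_bin-calibration *)
  (forall (j : 'I_J) (i : 'I_d),
     Eon P (f \o X) (B j) (fun w => tnth (Y w) i - tnth (f (X w)) i) = 0%E) ->
  let m := fun j => cond_mean P (f \o X) (B j) (f \o X) in
  let qstar := pw_const B m in
  (* m_j = E[f(X) | f(X) in B_j] = E[Y | f(X) in B_j] *)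
  (forall j, m j = cond_mean P (f \o X) (B j) Y) /\
  (* the piecewise-constant belief q*(v) = m_j on B_j is a worst-case belief *)
  (Qset P (f \o X) B qstar /\
   forall q, Qset P (f \o X) B q ->
     (worst_obj P (f \o X) u qstar <= worst_obj P (f \o X) u q)%E) /\
  (* there is a robust-optimal policy best-responding to the bin mean on every
     bin, and every robust-optimal policy best-responds to the bin mean a.e.
     (w.r.t. the law of f(X)) *)
  (exists a, robust_optimal P (f \o X) u B a /\
     forall (j : 'I_J) v, B j v -> forall b : A, u b (m j) <= u (a v) (m j)) /\
  (forall a : d.-tuple R -> A,
     robust_optimal P (f \o X) u B a ->
     forall j : 'I_J,
       {ae pushforward P (f \o X), forall v,
          B j v -> forall b : A, u b (m j) <= u (a v) (m j)}).
Proof.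
move=> mX mY cY mf cf hA hu hB pos cal m qstar.
have mV : measurable_fun setT (f \o X) := measurableT_comp mf mX.
have cV : forall w, cube ((f \o X) w) by move=> w; exact: cf.
have /card_gt0P [a0 _] := hA.
exact: (main_sec mV cV hB pos a0 hu mY cY cal).
Qed.
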